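(* Let $G_1$ and $G_2$ be two connected graphs, each of diameter at most two. Then $\chi_L(G_1+G_2)=\chi_L(G_1)+\chi_L(G_2)$.
   Context: All graphs are finite, simple (no loops or multiple edges). A proper $k$-coloring of $G$ is a map $f$ from $V(G)$ onto $[k]=\{1,\dots,k\}$ such that adjacent vertices receive different colors. For a connected graph $G$ with proper $k$-coloring $f$, let $V_i=f^{-1}(i)$ and $\Pi=(V_1,\dots,V_k)$; the color code of a vertex $v$ is $c_\Pi(v)=(d(v,V_1),\dots,d(v,V_k))$, where $d(v,S)=\min_{x\in S} d(v,x)$. The coloring $f$ is a locating coloring if distinct vertices have distinct color codes; the locating chromatic number $\chi_L(G)$ is the minimum number of colors in a locating coloring of $G$. The join $G_1+G_2$ is the graph on $V(G_1)\cup V(G_2)$ (disjoint) with edge set $E(G_1)\cup E(G_2)\cup\{uv: u\in V(G_1), v\in V(G_2)\}$. *)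

(* Defs.v *)
From mathcomp Require Import all_boot.
Set Implicit Arguments. Unset Strict Implicit. Unset Printing Implicit Defensive.

Section Graphs.
Variable T : finType.
Implicit Types (e : rel T).

Definition simple_graph e := symmetric e /\ irreflexive e.

Fixpoint reach e (n : nat) (u v : T) : bool :=
  match n with
  | 0 => u == v
  | n'.+1 => reach e n' u v || [exists w, reach e n' u w && e w v]
  end.

Definition connected_graph e := 0 < #|T| /\ forall u v : T, connect e u v.

(* d(v,S) = min_{x in S} d(v,x): least n such that some x in S is within
   distance n of v (searched among 0..#|T|-1, which suffices for connected
   graphs and nonempty S). *)
Definition sdist e (S : {set T}) (v : T) : nat :=
  find (fun n => [exists x in S, reach e n v x]) (iota 0 #|T|).

Definition dist e (u v : T) : nat := sdist e [set v] u.

Definition diameter_le e (d : nat) := forall u v : T, dist e u v <= d.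

Definition proper_coloring e k (f : T -> 'I_k) :=
  (forall u v, e u v -> f u != f v) /\ (forall i : 'I_k, exists v, f v = i).

Definition color_code e k (f : T -> 'I_k) (v : T) : 'I_k -> nat :=
  fun i => sdist e [set x | f x == i] v.

Definition locating_coloring e k (f : T -> 'I_k) :=
  proper_coloring e f /\
  forall u v, (forall i, color_code e f u i = color_code e f v i) -> u = v.

Definition is_locating_chromatic_number e (k : nat) :=
  (exists f : T -> 'I_k, locating_coloring e f) /\
  (forall k' (f : T -> 'I_k'), locating_coloring e f -> k <= k').

End Graphs.

Definition join_rel (T1 T2 : finType) (e1 : rel T1) (e2 : rel T2) : rel (T1 + T2)%type :=
  fun x y => match x, y with
             | inl a, inl b => e1 a b
             | inr a, inr b => e2 a b
             | _, _ => true
             end.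

(* Main.v *)
Require Import Defs.
From mathcomp Require Import all_boot zify.
Set Implicit Arguments. Unset Strict Implicit. Unset Printing Implicit Defensive.

Section Gen.
Variable T : finType.
Implicit Types (e : rel T) (S : {set T}).

Definition cls e S v := if v \in S then 0 else if [exists x in S, e v x] then 1 else 2.

Lemma card3 (a b c : T) : a != b -> a != c -> b != c -> 2 < #|T|.
Proof.
move=> ab ac bc; have := max_card (a |: (b |: [set c])).
rewrite !cardsU1 cards1 !inE (negbTE ab) (negbTE ac) (negbTE bc) /=.
by [].
Qed.

Lemma sdist_le e S v x m : x \in S -> reach e m v x -> m < #|T| -> sdist e S v <= m.
Proof.
move=> xS r lt; rewrite /sdist leqNgt; apply/negP => h.
have := before_find 0 h; rewrite nth_iota // add0n.
move=> /negbT /negP; apply; apply/existsP; exists x; by rewrite xS.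
Qed.

Lemma find_mono (p q : pred nat) s : (forall n, q n -> p n) -> find p s <= find q s.
Proof.
move=> H; elim: s => //= y s IH.
case: (boolP (q y)) => qy; first by rewrite (H _ qy).
by case: (p y).
Qed.

Lemma min2 e S v : (exists x, x \in S) -> minn (sdist e S v) 2 = cls e S v.
Proof.
move=> [x xS]; rewrite /sdist /cls.
case: (boolP (v \in S)) => vS.
  have : 0 < #|T| by apply/card_gt0P; exists v.
  case: #|T| => [|n] //= _.
  suff -> : [exists x0 in S, v == x0] by [].
  by apply/existsP; exists v; rewrite vS eqxx.
have : 1 < #|T|.
  apply/card_gt1P; exists v, x; split => //; apply: contraNneq vS => ->; done.
case: #|T| => [|[|n]] //= _.
have -> : [exists x0 in S, v == x0] = false.
  apply/negbTE/existsP => [[y /andP[yS /eqP vy]]]; by move: vS; rewrite vy yS.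
have -> : [exists x0 in S, (v == x0) || [exists w, (v == w) && e w x0]] = [exists x in S, e v x].
  apply/existsP/existsP => [[y /andP[yS /orP[/eqP vy| /existsP[w /andP[/eqP vw ew]]]]]|[y /andP[yS ey]]].
  - by move: vS; rewrite vy yS.
  - by exists y; rewrite yS vw.
  - exists y; rewrite yS /=; apply/orP; right; apply/existsP; exists v; by rewrite eqxx.
case: [exists x in S, e v x] => //.
Qed.

Lemma sdist_le2 e S v : (exists x, x \in S) ->
  (forall x, x \in S -> v != x -> ~~ e v x -> exists w, [&& w != v, w != x, e v w & e w x]) ->
  sdist e S v <= 2.
Proof.
move=> [x0 x0S] H.
case: (boolP (v \in S)) => vS.
  have h : sdist e S v <= 0.
    apply: (sdist_le (m := 0) vS); first by rewrite /=.
    by apply/card_gt0P; exists v.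
  by apply: leq_trans h _.
have vx : v != x0 by apply: contraNneq vS => ->.
case: (boolP (e v x0)) => evx.
  have h : sdist e S v <= 1.
    apply: (sdist_le (m := 1) x0S).
      rewrite /=; apply/orP; right; apply/existsP; exists v; by rewrite eqxx.
    by apply/card_gt1P; exists v, x0.
  by apply: leq_trans h _.
have [w /and4P[wv wx ew ewx]] := H _ x0S vx evx.
apply: (sdist_le (m := 2) x0S).
  rewrite /=; apply/orP; right; apply/existsP; exists w; rewrite ewx andbT.
  apply/orP; right; apply/existsP; exists v; by rewrite eqxx.
by apply: (card3 (c := w) vx); rewrite eq_sym.
Qed.

Lemma sdist_cls e S v : (exists x, x \in S) -> sdist e S v <= 2 -> sdist e S v = cls e S v.
Proof. by move=> ne le; rewrite -min2 //; apply/esym/minn_idPl. Qed.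

Lemma diam_le2 e S v x : diameter_le e 2 -> x \in S -> sdist e S v <= 2.
Proof.
move=> d xS; apply: leq_trans (d v x); rewrite /dist /sdist.
apply: find_mono => n /existsP[y /andP[/set1P -> r]].
by apply/existsP; exists x; rewrite xS.
Qed.
End Gen.

Section Join.
Variables (T1 T2 : finType) (e1 : rel T1) (e2 : rel T2) (a0 : T1) (b0 : T2).
Local Notation J := (join_rel e1 e2).

Lemma sdist_join (S : {set (T1 + T2)%type}) v : (exists x, x \in S) ->
  sdist J S v = cls J S v.
Proof.
move=> ne; apply: sdist_cls => //; apply: sdist_le2 => // x xS vx.
case: v vx => [a|b]; case: x xS => [c|d] //= _ _ _.
- by exists (inr b0).
- by exists (inl a0).
Qed.

Lemma cls_join_l (S : {set (T1 + T2)%type}) (W : {set T1}) a :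
  (forall c, (inl c \in S) = (c \in W)) -> (forall b, inr b \notin S) ->
  cls J S (inl a) = cls e1 W a.
Proof.
move=> HW Hr; rewrite /cls HW.
have -> : [exists x in S, J (inl a) x] = [exists c in W, e1 a c] => //.
apply/existsP/existsP => [[[c|b] /andP[xS ex]] | [c /andP[cW ex]]].
- by exists c; rewrite -HW xS.
- by move: (Hr b); rewrite xS.
- by exists (inl c); rewrite HW cW.
Qed.

Lemma cls_join_r (S : {set (T1 + T2)%type}) (W : {set T2}) b :
  (forall c, (inr c \in S) = (c \in W)) -> (forall a, inl a \notin S) ->
  cls J S (inr b) = cls e2 W b.
Proof.
move=> HW Hr; rewrite /cls HW.
have -> : [exists x in S, J (inr b) x] = [exists c in W, e2 b c] => //.
apply/existsP/existsP => [[[a|c] /andP[xS ex]] | [c /andP[cW ex]]].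
- by move: (Hr a); rewrite xS.
- by exists c; rewrite -HW xS.
- by exists (inr c); rewrite HW cW.
Qed.

Lemma cls_join_l1 (S : {set (T1 + T2)%type}) a :
  (exists x, x \in S) -> (forall c, inl c \notin S) -> cls J S (inl a) = 1.
Proof.
move=> [[c|b] xS] H; first by move: (H c); rewrite xS.
rewrite /cls (negbTE (H a)).
suff -> : [exists x in S, J (inl a) x] by [].
by apply/existsP; exists (inr b); rewrite xS.
Qed.

Lemma cls_join_r1 (S : {set (T1 + T2)%type}) b :
  (exists x, x \in S) -> (forall c, inr c \notin S) -> cls J S (inr b) = 1.
Proof.
move=> [[a|c] xS] H; last by move: (H c); rewrite xS.
rewrite /cls (negbTE (H b)).
suff -> : [exists x in S, J (inr b) x] by [].
by apply/existsP; exists (inl a); rewrite xS.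
Qed.
End Join.

Section LB.
Variables (T1 T2 : finType) (e1 : rel T1) (e2 : rel T2) (a0 : T1) (b0 : T2).
Local Notation J := (join_rel e1 e2).
Variables (k : nat) (f : (T1 + T2)%type -> 'I_k).
Hypothesis Hf : locating_coloring J f.

Definition C1 := [set i | [exists a, f (inl a) == i]].
Definition C2 := [set i | [exists b, f (inr b) == i]].

Lemma lb_left : exists f1 : T1 -> 'I_#|C1|, locating_coloring e1 f1.
Proof.
have x0 : f (inl a0) \in C1 by rewrite inE; apply/existsP; exists a0.
have fC a : f (inl a) \in C1 by rewrite inE; apply/existsP; exists a.
pose f1 a := enum_rank_in x0 (f (inl a)).
have f1K a : enum_val (f1 a) = f (inl a) by rewrite /f1 enum_rankK_in.
case: Hf => [[Hp Hon] Hloc].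
exists f1; split; [split|].
- move=> u v euv; apply/eqP => h.
  have := Hp (inl u) (inl v) euv; by rewrite -f1K -(f1K v) h eqxx.
- move=> j; have : enum_val j \in C1 := enum_valP j.
  rewrite inE => /existsP [a /eqP ha]; exists a; by rewrite /f1 ha enum_valK_in.
- move=> u v H; suff : inl u = inl v :> (T1 + T2)%type by case.
  apply: Hloc => i; rewrite /color_code.
  have neS : exists x, x \in [set x | f x == i].
    by have [x hx] := Hon i; exists x; rewrite inE hx.
  rewrite !(sdist_join _ _ a0 b0) //.
  case: (boolP (i \in C1)) => iC.
  + have wE c : (inl c \in [set x | f x == i]) =
       (c \in [set c | f1 c == enum_rank_in x0 i]).
      rewrite !inE; apply/eqP/eqP => h; first by rewrite /f1 h.
      by rewrite -f1K h enum_rankK_in.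
    have nr b : inr b \notin [set x | f x == i].
      move: iC; rewrite inE => /existsP [c /eqP <-]; rewrite inE.
      by apply: Hp.
    have neW : exists c, c \in [set c | f1 c == enum_rank_in x0 i].
      move: iC; rewrite inE => /existsP [c /eqP hc]; exists c; by rewrite -wE inE hc.
    rewrite !(cls_join_l _ _ _ wE nr) -!min2 //.
    by have := H (enum_rank_in x0 i); rewrite /color_code => ->.
  + have nl c : inl c \notin [set x | f x == i].
      rewrite inE; apply: contra iC => /eqP <-; exact: fC.
    by rewrite !cls_join_l1.
Qed.

Lemma lb_right : exists f2 : T2 -> 'I_#|C2|, locating_coloring e2 f2.
Proof.
have x0 : f (inr b0) \in C2 by rewrite inE; apply/existsP; exists b0.
have fC a : f (inr a) \in C2 by rewrite inE; apply/existsP; exists a.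
pose f1 a := enum_rank_in x0 (f (inr a)).
have f1K a : enum_val (f1 a) = f (inr a) by rewrite /f1 enum_rankK_in.
case: Hf => [[Hp Hon] Hloc].
exists f1; split; [split|].
- move=> u v euv; apply/eqP => h.
  have := Hp (inr u) (inr v) euv; by rewrite -f1K -(f1K v) h eqxx.
- move=> j; have : enum_val j \in C2 := enum_valP j.
  rewrite inE => /existsP [a /eqP ha]; exists a; by rewrite /f1 ha enum_valK_in.
- move=> u v H; suff : inr u = inr v :> (T1 + T2)%type by case.
  apply: Hloc => i; rewrite /color_code.
  have neS : exists x, x \in [set x | f x == i].
    by have [x hx] := Hon i; exists x; rewrite inE hx.
  rewrite !(sdist_join _ _ a0 b0) //.
  case: (boolP (i \in C2)) => iC.
  + have wE c : (inr c \in [set x | f x == i]) =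
       (c \in [set c | f1 c == enum_rank_in x0 i]).
      rewrite !inE; apply/eqP/eqP => h; first by rewrite /f1 h.
      by rewrite -f1K h enum_rankK_in.
    have nr b : inl b \notin [set x | f x == i].
      move: iC; rewrite inE => /existsP [c /eqP <-]; rewrite inE.
      by apply: Hp.
    have neW : exists c, c \in [set c | f1 c == enum_rank_in x0 i].
      move: iC; rewrite inE => /existsP [c /eqP hc]; exists c; by rewrite -wE inE hc.
    rewrite !(cls_join_r _ _ _ wE nr) -!min2 //.
    by have := H (enum_rank_in x0 i); rewrite /color_code => ->.
  + have nl c : inr c \notin [set x | f x == i].
      rewrite inE; apply: contra iC => /eqP <-; exact: fC.
    by rewrite !cls_join_r1.
Qed.

Lemma C12 : #|C1| + #|C2| <= k.
Proof.
rewrite -cardsUI.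
have -> : C1 :&: C2 = set0.
  apply/setP => i; rewrite !inE; apply/negbTE/andP => [[/existsP[a /eqP <-] /existsP[b /eqP hb]]].
  case: Hf => [[Hp _] _]; by have := Hp (inr b) (inl a) isT; rewrite hb eqxx.
rewrite cards0 addn0; apply: leq_trans (max_card _) _; by rewrite card_ord.
Qed.
End LB.

Section UB.
Variables (T1 T2 : finType) (e1 : rel T1) (e2 : rel T2) (a0 : T1) (b0 : T2).
Local Notation J := (join_rel e1 e2).
Variables (k1 k2 : nat) (f1 : T1 -> 'I_k1) (f2 : T2 -> 'I_k2).
Hypotheses (Hf1 : locating_coloring e1 f1) (Hf2 : locating_coloring e2 f2).
Hypotheses (d1 : diameter_le e1 2) (d2 : diameter_le e2 2).

Definition g (x : (T1 + T2)%type) : 'I_(k1 + k2) :=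
  match x with inl a => lshift k2 (f1 a) | inr b => rshift k1 (f2 b) end.

Lemma g_onto (i : 'I_(k1 + k2)) : exists v, g v = i.
Proof.
case: Hf1 => [[_ Hon1] _]; case: Hf2 => [[_ Hon2] _].
case: (split_ordP i) => j ->.
- by have [a ha] := Hon1 j; exists (inl a); rewrite /= ha.
- by have [b hb] := Hon2 j; exists (inr b); rewrite /= hb.
Qed.

Lemma ub : locating_coloring J g.
Proof.
case: Hf1 => [[Hp1 Hon1] Hl1]; case: Hf2 => [[Hp2 Hon2] Hl2].
have neS i : exists x, x \in [set x | g x == i].
  by have [x hx] := g_onto i; exists x; rewrite inE hx.
split; [split|]; last first.
- move=> u v H.
  have H' i := H i; move: H'; rewrite /color_code => H'.
  case: u H H' => [a|a]; case: v => [b|b] H H'.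
  + congr inl; apply: Hl1 => j; rewrite /color_code.
    have wE c : (inl c \in [set x | g x == lshift k2 j]) = (c \in [set c | f1 c == j]).
      by rewrite !inE /= eq_lshift.
    have nr b' : inr b' \notin [set x | g x == lshift k2 j] by rewrite inE /= eq_rlshift.
    have neW : exists c, c \in [set c | f1 c == j].
      by have [c hc] := Hon1 j; exists c; rewrite inE hc.
    have [c cW] := neW.
    have E v : sdist e1 [set c | f1 c == j] v = cls e1 [set c | f1 c == j] v.
      by apply: sdist_cls => //; exact: diam_le2 d1 cW.
    rewrite !E.
    have := H' (lshift k2 j).
    by rewrite !(sdist_join _ _ a0 b0) ?neS // !(cls_join_l _ _ _ wE nr).
  + have := H' (g (inl a)); rewrite !(sdist_join _ _ a0 b0) ?neS // /cls !inE eqxx /=.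
    by rewrite eq_rlshift; case: ifP.
  + have := H' (g (inr a)); rewrite !(sdist_join _ _ a0 b0) ?neS // /cls !inE eqxx /=.
    by rewrite eq_lrshift; case: ifP.
  + congr inr; apply: Hl2 => j; rewrite /color_code.
    have wE c : (inr c \in [set x | g x == rshift k1 j]) = (c \in [set c | f2 c == j]).
      by rewrite !inE /= eq_rshift.
    have nr b' : inl b' \notin [set x | g x == rshift k1 j] by rewrite inE /= eq_lrshift.
    have neW : exists c, c \in [set c | f2 c == j].
      by have [c hc] := Hon2 j; exists c; rewrite inE hc.
    have [c cW] := neW.
    have E v : sdist e2 [set c | f2 c == j] v = cls e2 [set c | f2 c == j] v.
      by apply: sdist_cls => //; exact: diam_le2 d2 cW.
    rewrite !E.
    have := H' (rshift k1 j).
    by rewrite !(sdist_join _ _ a0 b0) ?neS // !(cls_join_r _ _ _ wE nr).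
- exact: g_onto.
- move=> [a|a] [b|b] //= h.
  + by rewrite eq_lshift; apply: Hp1.
  + by rewrite eq_lrshift.
  + by rewrite eq_rlshift.
  + by rewrite eq_rshift; apply: Hp2.
Qed.
End UB.
Unset Implicit Arguments.

Theorem corollary1 (T1 T2 : finType) (e1 : rel T1) (e2 : rel T2) (k1 k2 : nat) :
  simple_graph e1 -> simple_graph e2 ->
  connected_graph e1 -> connected_graph e2 ->
  diameter_le e1 2 -> diameter_le e2 2 ->
  is_locating_chromatic_number e1 k1 ->
  is_locating_chromatic_number e2 k2 ->
  is_locating_chromatic_number (join_rel e1 e2) (k1 + k2).
Proof.
move=> _ _ [c1 _] [c2 _] d1 d2 [[f1 Hf1] m1] [[f2 Hf2] m2].
have [a0 _] := card_gt0P c1.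
have [b0 _] := card_gt0P c2.
split.
- exists (g f1 f2); exact: (ub a0 b0 Hf1 Hf2 d1 d2).
- move=> k' f Hf.
  have [h1 H1] := lb_left a0 b0 Hf.
  have [h2 H2] := lb_right a0 b0 Hf.
  have := m1 _ _ H1; have := m2 _ _ H2; have := C12 Hf; lia.
Qed.
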